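(* Let $2\le r\le n$, and let $A$ and $A+\sum_{i=1}^r\mathbf{x}_i\mathbf{x}_i^{\top}$ both lie in $\mathrm{SGL}_n(\mathbb{F}_2)$, where $\mathbf{x}_1,\ldots,\mathbf{x}_r\in\mathbb{F}_2^n$ are linearly independent and $[\mathbf{x}_i^{\top}A^{-1}\mathbf{x}_j]_{i,j=1}^r$ has rank one and trace zero. Then $d\big(A,A+\sum_{i=1}^r\mathbf{x}_i\mathbf{x}_i^{\top}\big)\ge r+2$.
   Context: $\mathrm{SGL}_n(\mathbb{F}_2)$ is the set of invertible symmetric $n\times n$ matrices over the binary field; $d$ is the graph distance in the graph $\Gamma_n$ on $\mathrm{SGL}_n(\mathbb{F}_2)$ where $A\sim B$ iff $\mathrm{rank}(A-B)=1$. *)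

(* Defs.v *)
From mathcomp Require Import all_boot all_algebra.
Set Implicit Arguments. Unset Strict Implicit. Unset Printing Implicit Defensive.
Import GRing.Theory.
Local Open Scope ring_scope.

Definition SGL (n : nat) (A : 'M['F_2]_n) : bool :=
  (A^T == A) && (A \in unitmx).

Definition Gadj (n : nat) (A B : 'M['F_2]_n) : bool :=
  \rank (A - B) == 1%N.

Definition walk (n : nat) (A B : 'M['F_2]_n) (k : nat) : Prop :=
  exists s : seq 'M['F_2]_n,
    [/\ size s = k, path (@Gadj n) A s, all (@SGL n) (A :: s) & last A s = B].

(* d(A,B) >= m  (graph distance in Gamma_n, +infinity if no walk). *)
Definition dist_ge (n : nat) (A B : 'M['F_2]_n) (m : nat) : Prop :=
  forall k, walk A B k -> (m <= k)%N.

(* Main.v *)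
Require Import Defs.
From mathcomp Require Import all_boot all_algebra zify.
Import GRing.Theory.
Set Implicit Arguments. Unset Strict Implicit.
Local Open Scope ring_scope.

Lemma F2cases (x : 'F_2) : x = 0 \/ x = 1.
Proof.
case: x => [[|[|m]] Hm]; [left|right|]; try exact: val_inj. by [].
Qed.
Lemma F2opp (x : 'F_2) : - x = x.
Proof. by apply: oppr_pchar2; apply: pchar_Fp. Qed.
Lemma F2mul (x : 'F_2) : x * x = x.
Proof. by case: (F2cases x) => ->; rewrite ?mulr0 ?mulr1. Qed.
Lemma F2neq0 (x : 'F_2) : x != 0 -> x = 1.
Proof. by case: (F2cases x) => ->; rewrite ?eqxx. Qed.

Lemma mxopp2 m n (M : 'M['F_2]_(m,n)) : - M = M.
Proof. by apply/matrixP => i j; rewrite mxE F2opp. Qed.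
Lemma mxadd2 m n (M : 'M['F_2]_(m,n)) : M + M = 0.
Proof. by rewrite -{2}(mxopp2 M) subrr. Qed.

Lemma sym_rank1 n (D : 'M['F_2]_n) : D^T = D -> \rank D = 1%N ->
  exists u : 'cV_n, D = u *m u^T.
Proof.
move=> hs hr.
have hD0 : D != 0 by rewrite -mxrank_eq0 hr.
have : exists (a : 'M['F_2]_(n, \rank D)) (b : 'M['F_2]_(\rank D, n)), a *m b = D.
  by exists (col_base D), (row_base D); exact: mulmx_base.
rewrite hr => -[a [b hab]].
have hent : forall i j, D i j = a i 0 * b 0 j.
  by move=> i j; rewrite -hab mxE big_ord1.
have hsym : forall i j, a i 0 * b 0 j = a j 0 * b 0 i.
  by move=> i j; rewrite -!hent -{1}hs mxE.
have [i0 [j0 h0]] : exists i0 j0, D i0 j0 != 0.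
  case: (pickP (fun ij : 'I_n * 'I_n => D ij.1 ij.2 != 0)) => [[i j] /= h|h].
    by exists i, j.
  case/negP: hD0; apply/eqP/matrixP => i j; rewrite mxE.
  by move: (h (i,j)) => /= /negbFE /eqP.
move: h0; rewrite hent mulf_eq0 negb_or => /andP [/F2neq0 ha0 /F2neq0 hb0].
have haj : a j0 0 = 1.
  apply: F2neq0; move: (hsym i0 j0); rewrite ha0 hb0 mul1r => h.
  by apply/eqP => h'; move: h; rewrite h' mul0r => /eqP; rewrite oner_eq0.
have hab' : forall i, a i 0 = b 0 i.
  by move=> i; rewrite -[a i 0]mulr1 -hb0 hsym haj mul1r.
exists b^T; apply/matrixP => i j.
by rewrite hent !mxE big_ord1 !mxE hab'.
Qed.

Definition good r (G : 'M['F_2]_r) :=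
  forall c : 'cV['F_2]_r, c^T *m G *m c = 0 -> G *m c = 0.

Lemma good_sym_rank1 r (G : 'M['F_2]_r) : G^T = G -> \rank G = 1%N -> good G.
Proof.
move=> hs hr; have [u ->] := sym_rank1 hs hr => c.
have ht : c^T *m u = (u^T *m c)^T by rewrite trmx_mul trmxK.
rewrite !mulmxA ht -!mulmxA.
set t := u^T *m c => h.
have ht0 : t 0 0 = 0.
  move/matrixP: h => /(_ 0 0); rewrite !mxE big_ord1 !mxE F2mul.
  by [].
by rewrite [t]mx11_scalar ht0 raddf0 mulmx0.
Qed.

Lemma sherman n (M : 'M['F_2]_n) (y : 'cV_n) :
  M \in unitmx -> (M + y *m y^T) \in unitmx -> y != 0 ->
  y^T *m invmx M *m y = 0 /\
  invmx (M + y *m y^T) = invmx M + invmx M *m y *m y^T *m invmx M.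
Proof.
move=> hM hM' hy0.
set Mi := invmx M.
have hs : y^T *m Mi *m y = 0.
  set s := y^T *m Mi *m y.
  case: (F2cases (s 0 0)) => hs; first by rewrite [s]mx11_scalar hs raddf0.
  have hv : (M + y *m y^T) *m (Mi *m y) = 0.
    rewrite mulmxDl mulmxA mulmxV // mul1mx -!mulmxA (mulmxA y^T) -/s.
    by rewrite [s]mx11_scalar hs mulmx1 mxadd2.
  have : Mi *m y = 0.
    by rewrite -(mulKmx hM' (Mi *m y)) hv mulmx0.
  move=> h; case/negP: hy0; apply/eqP.
  by rewrite -(mul1mx y) -(mulmxV hM) -mulmxA h mulmx0.
split => //.
rewrite -[RHS](mulKmx hM'); apply/esym.
rewrite -[X in _ = X]mulmx1; congr (_ *m _).
rewrite mulmxDl !mulmxDr !mulmxA mulmxV // mul1mx.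
have -> : y *m y^T *m Mi *m y = y *m (y^T *m Mi *m y) by rewrite !mulmxA.
rewrite hs mulmx0 !mul0mx addr0 -addrA mxadd2 addr0.
by [].
Qed.

Lemma chain r n (Xr : 'M['F_2]_(r,n)) (s : seq 'M['F_2]_n) :
  forall M, SGL M -> path (@Gadj n) M s -> all (@SGL n) s ->
  exists ys : seq 'cV['F_2]_n,
    [/\ size ys = size s, M + last M s = \sum_(y <- ys) y *m y^T &
     (all (fun y => (y^T <= Xr)%MS) ys -> good (Xr *m invmx M *m Xr^T) ->
      forall y, y \in ys -> Xr *m invmx M *m y = 0)].
Proof.
elim: s => [|M1 s IH] M hM /=.
  move=> _ _; exists [::]; split => //; first by rewrite big_nil mxadd2.
move=> /andP [hadj hpath] /andP [hM1 hall].
move: (hM) (hM1) => /andP [/eqP hMs hMu] /andP [/eqP hM1s hM1u].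
set D := M - M1.
have hDs : D^T = D by rewrite /D linearB /= hMs hM1s.
have hDr : \rank D = 1%N by apply/eqP.
have [y hy] := sym_rank1 hDs hDr.
have hM1eq : M1 = M + y *m y^T by rewrite -hy /D addrA mxadd2 add0r mxopp2.
have hy0 : y != 0.
  by apply/eqP => h; move: hDr; rewrite hy h mul0mx mxrank0.
have hu : M + y *m y^T \in unitmx by rewrite -hM1eq.
have [hs hinv] := sherman hMu hu hy0.
have [ys [hsz hsum himp]] := IH M1 hM1 hpath hall.
exists (y :: ys); split => /=.
- by rewrite hsz.
- by rewrite big_cons -hy -hsum /D addrA subrK.
move=> /andP [hyX hallX] hgood.
have hXy : Xr *m invmx M *m y = 0.
  case/submxP: hyX => c' hc'.
  have hyc : y = Xr^T *m c'^T by rewrite -trmx_mul -hc' trmxK.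
  have := hgood c'^T; rewrite trmxK.
  have -> : c' *m (Xr *m invmx M *m Xr^T) *m c'^T = y^T *m invmx M *m y.
    by rewrite hc' hyc !mulmxA.
  by move/(_ hs); rewrite hyc !mulmxA.
have hG1 : Xr *m invmx M1 *m Xr^T = Xr *m invmx M *m Xr^T.
  by rewrite hM1eq hinv mulmxDr mulmxDl !mulmxA hXy !mul0mx addr0.
move=> z; rewrite inE => /orP [/eqP -> //| hz].
have hg1 : good (Xr *m invmx M1 *m Xr^T) by rewrite hG1.
have := himp hallX hg1 z hz.
by rewrite hM1eq hinv mulmxDr mulmxDl !mulmxA hXy !mul0mx addr0.
Qed.

Unset Implicit Arguments.
Theorem lemma4p7 (n r : nat) (A : 'M['F_2]_n) (x : 'I_r -> 'cV['F_2]_n) :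
  (2 <= r)%N -> (r <= n)%N ->
  SGL A ->
  SGL (A + \sum_(i < r) x i *m (x i)^T) ->
  row_free (\matrix_(i < r, j < n) x i j 0) ->
  \rank (\matrix_(i < r, j < r) ((x i)^T *m invmx A *m x j) 0 0) = 1%N ->
  \tr (\matrix_(i < r, j < r) ((x i)^T *m invmx A *m x j) 0 0) = 0 ->
  dist_ge A (A + \sum_(i < r) x i *m (x i)^T) (r + 2).
Proof.
move=> _ _ hA _ hfree hrank _ k [s [hsz hpath hall hlast]].
set Xr := \matrix_(i < r, j < n) x i j 0 in hfree.
have hsumX : \sum_(i < r) x i *m (x i)^T = Xr^T *m Xr.
  apply/matrixP => a b; rewrite summxE !mxE; apply: eq_bigr => i _.
  by rewrite !mxE big_ord1 !mxE.
have hG : \matrix_(i < r, j < r) ((x i)^T *m invmx A *m x j) 0 0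
          = Xr *m invmx A *m Xr^T.
  apply/matrixP => i j; rewrite !mxE; apply: eq_bigr => b _.
  rewrite !mxE; congr (_ * _); apply: eq_bigr => a _; by rewrite !mxE.
rewrite hG in hrank.
move: hall => /= /andP [_ hall].
have [ys [hys hsum himp]] := chain Xr hA hpath hall.
rewrite hlast hsumX addrA mxadd2 add0r in hsum.
set Yr := \matrix_(j < size ys, b < n) (nth 0 ys j) b 0.
have hY : \sum_(y <- ys) y *m y^T = Yr^T *m Yr.
  apply/matrixP => a b; rewrite summxE !mxE (big_nth 0) big_mkord.
  apply: eq_bigr => i _; by rewrite !mxE big_ord1 !mxE.
rewrite leqNgt; apply/negP => hk.
move: (hfree); rewrite /row_free => /eqP hrX.
set S := Xr^T *m Xr.
have hrS : \rank S = r by rewrite /S mxrankMfree // mxrank_tr.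
have hSX : (S <= Xr)%MS by apply: submxMl.
have hXS : (Xr <= S)%MS by rewrite -(mxrank_leqif_sup hSX).2 hrS hrX.
have hSY : (S <= Yr)%MS by rewrite /S hsum hY submxMl.
have hXY := submx_trans hXS hSY.
have hrY : \rank Yr = r.
  have := mxrankS hXY; rewrite hrX => hge.
  case: (eqVneq (\rank Yr) (size ys)) => hYk.
    have hfY : row_free Yr by rewrite /row_free hYk.
    have := mxrankMfree Yr^T hfY.
    by rewrite mxrank_tr -hY -hsum -/S hrS.
  have := rank_leq_row Yr; move: hYk hk hge hys hsz.
  move=> /eqP hYk hk hge hys' hsz' hle; lia.
have hYX : (Yr <= Xr)%MS by rewrite -(mxrank_leqif_sup hXY).2 hrY hrX.
have hallX : all (fun y => (y^T <= Xr)%MS) ys.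
  apply/allP => y hy.
  have hj : (index y ys < size ys)%N by rewrite index_mem.
  have -> : y^T = row (Ordinal hj) Yr.
    by apply/rowP => b; rewrite !mxE nth_index.
  exact: submx_trans (row_sub _ _) hYX.
move: hA => /andP [/eqP hAs hAu].
have hGs : (Xr *m invmx A *m Xr^T)^T = Xr *m invmx A *m Xr^T.
  by rewrite !trmx_mul trmxK trmx_inv hAs mulmxA.
have hz := himp hallX (good_sym_rank1 hGs hrank).
have hZ : Xr *m invmx A *m Yr^T = 0.
  apply/matrixP => i j.
  have := hz (nth 0 ys j) (mem_nth 0 (ltn_ord j)).
  move/matrixP/(_ i 0); rewrite !mxE => h; rewrite -[RHS]h.
  apply: eq_bigr => b _; by rewrite !mxE.
have hG0 : (Xr *m invmx A *m Xr^T) *m Xr = 0 *m Xr.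
  by rewrite mul0mx -(mulmxA (Xr *m invmx A)) hsum hY mulmxA hZ mul0mx.
move: hrank; rewrite (row_free_inj hfree hG0) mxrank0.
by [].
Qed.
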